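(* Let $\psi:R\to R^*$ be a $G_0$-equivariant isomorphism; it is either symmetric ($\psi(r)(t)=\psi(t)(r)$) or alternating ($\psi(r)(t)=-\psi(t)(r)$). For \[M=\begin{pmatrix}\mathsf A&\mathsf B\\ \mathsf K&\mathsf D\end{pmatrix}\in\mathrm{End}(H\oplus H^* )\] (with $\mathsf A:H\to H$, $\mathsf B:H^*\to H$, $\mathsf K:H\to H^*$, $\mathsf D:H^*\to H^*$), let $\Phi(M)$ be the $G_0$-equivariant operator on $(H\otimes R)\oplus(H^*\otimes R^* )$ given by \[\begin{pmatrix}\mathsf A\otimes\mathrm{Id}_R&\mathsf B\otimes\psi^{-1}\\ \mathsf K\otimes\psi&\mathsf D\otimes\mathrm{Id}_{R^*}\end{pmatrix}.\] Then $\Phi(M)$ respects $b$ if and only if $M$ respects - the symmetric form $s(h_1+f_1,h_2+f_2)=f_1(h_2)+f_2(h_1)$ when $\psi$ is symmetric, resp. - the alternating form $a(h_1+f_1,h_2+f_2)=f_1(h_2)-f_2(h_1)$ when $\psi$ is alternating.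
   Context: Setting: - $G_0$ is a compact group, and $R$ is a finite-dimensional irreducible unitary $G_0$-representation isomorphic to its dual $R^*$. - $V$ is a finite-dimensional unitary $G_0$-representation all of whose irreducible subrepresentations are isomorphic to $R$. Duals carry the action $g(f)=f\circ g^{-1}$. - $H=\mathrm{Hom}_{G_0}(R,V)$, $H^*=\mathrm{Hom}_{G_0}(R^*,V^* )$, paired by $f(h)=\sum_i f(\vartheta_i)(h(e_i))$, where $(e_i)$ is a basis of $R$ and $(\vartheta_i)$ is the dual basis. - $\varepsilon:(H\otimes R)\oplus(H^*\otimes R^* )\to V\oplus V^*$, $h\otimes r+f\otimes t\mapsto h(r)+f(t)$, is a $G_0$-equivariant isomorphism. - $b$ denotes the pullback via $\varepsilon$ of the symmetric form $b_0(v_1+f_1,v_2+f_2)=f_1(v_2)+f_2(v_1)$ on $V\oplus V^*$. A linear map $M$ respects a bilinear form $F$ either as an isometry, $F(Mw_1,Mw_2)=F(w_1,w_2)$ (for invertible $M$), or infinitesimally, $F(Mw_1,w_2)+F(w_1,Mw_2)=0$. The equivalence holds in each sense. *)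

(* Defs.v *)
From HB Require Import structures.
From mathcomp Require Import all_boot all_order all_algebra.
From mathcomp Require Import complex.
From mathcomp Require Import all_classical all_reals topology normedtype.
Import numFieldNormedType.Exports.
Set Implicit Arguments. Unset Strict Implicit. Unset Printing Implicit Defensive.
Import GRing.Theory Num.Theory.
Local Open Scope ring_scope.

Definition compact_group (G : topologicalType) (mul : G -> G -> G) (inv : G -> G)
  (one : G) : Prop :=
  [/\ (forall x y z, mul x (mul y z) = mul (mul x y) z),
      (forall x, mul one x = x),
      (forall x, mul (inv x) x = one),
      continuous (fun p : G * G => mul p.1 p.2) /\ continuous inv
    & compact [set: G] /\ hausdorff_space G].

Section Reps.
Variables (R : realType) (G : topologicalType) (mul : G -> G -> G)
  (inv : G -> G) (one : G).
Local Notation C := (R[i]).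

(* A finite-dimensional continuous unitary representation on C^n (column
   vectors, g.v = rho g *m v, standard Hermitian inner product). *)
Definition unitary_rep n (rho : G -> 'M[C]_n) : Prop :=
  [/\ rho one = 1%:M,
      (forall g h, rho (mul g h) = rho g *m rho h),
      (forall g, (map_mx Num.conj (rho g))^T *m rho g = 1%:M)
    & forall i j, continuous (fun g => complex.Re (rho g i j)) /\
                  continuous (fun g => complex.Im (rho g i j))].

(* Dual representation on dual of C^n = C^n (coordinates in the dual basis):
   g(f) = f o g^{-1}. *)
Definition dual_rep n (rho : G -> 'M[C]_n) : G -> 'M[C]_n :=
  fun g => (rho (inv g))^T.

Definition equivariant n1 n2 (rho1 : G -> 'M[C]_n1) (rho2 : G -> 'M[C]_n2)
  (X : 'M[C]_(n2, n1)) : Prop :=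
  forall g, X *m rho1 g = rho2 g *m X.

Definition isomorphic_reps n (rho1 rho2 : G -> 'M[C]_n) : Prop :=
  exists X : 'M[C]_n, X \in unitmx /\ equivariant rho1 rho2 X.

(* The subspace of C^n spanned by the (transposed) rows of U is invariant. *)
Definition invariant_subspace n (rho : G -> 'M[C]_n) (U : 'M[C]_n) : Prop :=
  forall g, (U *m (rho g)^T <= U)%MS.

Definition irreducible_rep n (rho : G -> 'M[C]_n) : Prop :=
  (0 < n)%N /\
  forall U, invariant_subspace rho U -> \rank U = 0%N \/ \rank U = n.

Definition irreducible_subrep n (rho : G -> 'M[C]_n) (U : 'M[C]_n) : Prop :=
  [/\ invariant_subspace rho U, (0 < \rank U)%N &
      forall W, invariant_subspace rho W -> (W <= U)%MS ->
        \rank W = 0%N \/ (U <= W)%MS].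

Definition isotypic_of nR m (rhoR : G -> 'M[C]_nR) (rhoV : G -> 'M[C]_m) : Prop :=
  forall U, irreducible_subrep rhoV U ->
    exists X : 'M[C]_(m, nR),
      [/\ equivariant rhoR rhoV X, \rank X = nR & (X^T == U)%MS].
End Reps.

Section Forms.
Variable (R : realType).
Local Notation C := (R[i]).

Definition is_basis p q (P : 'M[C]_(p, q) -> Prop) k (b : 'I_k -> 'M[C]_(p, q)) : Prop :=
  [/\ (forall a, P (b a)),
      (forall c : 'I_k -> C, \sum_a c a *: b a = 0 -> forall a, c a = 0)
    & (forall X, P X -> exists c : 'I_k -> C, X = \sum_a c a *: b a)].

(* Evaluation of a functional (coordinates in the dual basis) on a vector. *)
Definition ev n (f v : 'cV[C]_n) : C := \sum_(j < n) f j 0 * v j 0.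

(* The pairing Hdual x H: f(h) = sum_i f(theta_i)(h(e_i)). *)
Definition pairing m nR (F X : 'M[C]_(m, nR)) : C :=
  \sum_(i < nR) ev (F *m delta_mx i 0) (X *m delta_mx i 0).

Definition combo p q k (b : 'I_k -> 'M[C]_(p, q)) (x : 'cV[C]_k) : 'M[C]_(p, q) :=
  \sum_a x a 0 *: b a.

(* Forms s and a on H (+) Hdual, in coordinates w.r.t. bases hb of H, fb of Hdual. *)
Definition sform m nR k k' (hb : 'I_k -> 'M[C]_(m, nR)) (fb : 'I_k' -> 'M[C]_(m, nR))
  (w1 w2 : 'cV[C]_(k + k')) : C :=
  pairing (combo fb (dsubmx w1)) (combo hb (usubmx w2))
  + pairing (combo fb (dsubmx w2)) (combo hb (usubmx w1)).

Definition aform m nR k k' (hb : 'I_k -> 'M[C]_(m, nR)) (fb : 'I_k' -> 'M[C]_(m, nR))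
  (w1 w2 : 'cV[C]_(k + k')) : C :=
  pairing (combo fb (dsubmx w1)) (combo hb (usubmx w2))
  - pairing (combo fb (dsubmx w2)) (combo hb (usubmx w1)).

(* Tensor products: C^k2 (x) C^n2 is modelled by 'M_(k2, n2) (the entry (a,i)
   is the coordinate on b_a (x) e_i); the operator A (x) P acts as u |-> A u P^T. *)
Definition tens_act k1 k2 n1 n2 (A : 'M[C]_(k1, k2)) (P : 'M[C]_(n1, n2))
  (u : 'M[C]_(k2, n2)) : 'M[C]_(k1, n1) := A *m u *m P^T.

Definition Phi k k' nR (A : 'M[C]_k) (B : 'M[C]_(k, k')) (K : 'M[C]_(k', k))
  (D : 'M[C]_k') (Psi : 'M[C]_nR) (w : 'M[C]_(k, nR) * 'M[C]_(k', nR)) :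
  'M[C]_(k, nR) * 'M[C]_(k', nR) :=
  (tens_act A 1%:M w.1 + tens_act B (invmx Psi) w.2,
   tens_act K Psi w.1 + tens_act D 1%:M w.2).

(* epsilon : (H (x) R) (+) (Hdual (x) Rdual) -> V (+) Vdual,  h (x) r + f (x) t |-> h(r) + f(t). *)
Definition epsilon m nR k k' (hb : 'I_k -> 'M[C]_(m, nR)) (fb : 'I_k' -> 'M[C]_(m, nR))
  (w : 'M[C]_(k, nR) * 'M[C]_(k', nR)) : 'cV[C]_m * 'cV[C]_m :=
  (\sum_(a < k) \sum_(i < nR) w.1 a i *: (hb a *m delta_mx i 0),
   \sum_(c < k') \sum_(j < nR) w.2 c j *: (fb c *m delta_mx j 0)).

Definition b0 m (p1 p2 : 'cV[C]_m * 'cV[C]_m) : C := ev p1.2 p2.1 + ev p2.2 p1.1.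

Definition bform m nR k k' (hb : 'I_k -> 'M[C]_(m, nR)) (fb : 'I_k' -> 'M[C]_(m, nR))
  (w1 w2 : 'M[C]_(k, nR) * 'M[C]_(k', nR)) : C :=
  b0 (epsilon hb fb w1) (epsilon hb fb w2).

Definition psi_symmetric nR (Psi : 'M[C]_nR) : Prop :=
  forall r t : 'cV[C]_nR, ev (Psi *m r) t = ev (Psi *m t) r.
Definition psi_alternating nR (Psi : 'M[C]_nR) : Prop :=
  forall r t : 'cV[C]_nR, ev (Psi *m r) t = - ev (Psi *m t) r.
End Forms.

Definition respects_isom (T : Type) (K : zmodType) (F : T -> T -> K) (f : T -> T) : Prop :=
  forall w1 w2, F (f w1) (f w2) = F w1 w2.
Definition respects_inf (T : Type) (K : zmodType) (F : T -> T -> K) (f : T -> T) : Prop :=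
  forall w1 w2, F (f w1) w2 + F w1 (f w2) = 0.

(* Main.v *)
Require Import Defs.
From HB Require Import structures.
From mathcomp Require Import all_boot all_order all_algebra.
From mathcomp Require Import complex.
From mathcomp Require Import all_classical all_reals topology normedtype.
From mathcomp Require Import ring.
Import GRing.Theory Num.Theory.
Local Open Scope ring_scope.

Module Helpers.
Set Implicit Arguments. Unset Strict Implicit.

Section Alg.
Variable F : fieldType.

Lemma form0_cV n (T : 'M[F]_n) :
  (forall x1 x2 : 'cV_n, (x1^T *m T *m x2) 0 0 = 0) -> T = 0.
Proof.
move=> H; apply/matrixP => a b; rewrite mxE.
have := H (delta_mx a 0) (delta_mx b 0).
by rewrite trmx_delta -rowE -colE !mxE.
Qed.

Lemma delta_sandwich n p (T : 'M[F]_n) (i : 'I_p) a b (j : 'I_p) :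
  delta_mx i a *m T *m delta_mx b j = T a b *: delta_mx i j.
Proof.
rewrite -(mul_delta_mx (0 : 'I_1)) -[delta_mx b j](mul_delta_mx (0 : 'I_1)).
rewrite !mulmxA -[_ *m delta_mx 0 a *m T]mulmxA -rowE.
rewrite -[_ *m row a T *m _]mulmxA -colE [col b (row a T)]mx11_scalar !mxE.
by rewrite mul_mx_scalar -scalemxAl mul_delta_mx.
Qed.

Lemma tr_delta n p (P : 'M[F]_(p, n)) (i : 'I_n) (j : 'I_p) : \tr (P *m delta_mx i j) = P j i.
Proof.
rewrite -(mul_delta_mx (0 : 'I_1)) mulmxA mxtrace_mulC mulmxA -rowE -colE.
by rewrite trace_mx11 !mxE.
Qed.

Lemma form0_tr n p (P : 'M[F]_p) (T : 'M[F]_n) : P != 0 ->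
  (forall W1 W2 : 'M_(n, p), \tr (P *m W1^T *m T *m W2) = 0) -> T = 0.
Proof.
move=> /eqP Pn0 H; apply/matrixP => a b; rewrite mxE.
apply/eqP; apply/negPn/negP => Tab; apply: Pn0.
apply/matrixP => j i; rewrite mxE.
have := H (delta_mx a i) (delta_mx b j).
rewrite trmx_delta -!mulmxA (mulmxA (delta_mx i a)) delta_sandwich.
rewrite -scalemxAr mxtraceZ tr_delta => /eqP; rewrite mulf_eq0 (negbTE Tab) /=.
by move/eqP.
Qed.
End Alg.

Section B.
Variable R : realType.
Local Notation C := (R[i]).
Variables (k k' nR : nat) (L : 'M[C]_(k', k)) (e : C) (Psi : 'M[C]_nR).

Definition bf (w1 w2 : 'M[C]_(k, nR) * 'M[C]_(k', nR)) : C :=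
  \tr (w1.2^T *m L *m w2.1) + \tr (w2.2^T *m L *m w1.1).
Definition Ff (c : C) (x1 x2 : 'cV[C]_(k + k')) : C :=
  c * (((dsubmx x1)^T *m L *m usubmx x2) 0 0 + e * ((dsubmx x2)^T *m L *m usubmx x1) 0 0).
Definition Smx : 'M[C]_(k + k') := block_mx 0 (e *: L^T) L 0.
Definition Wof (w : 'M[C]_(k, nR) * 'M[C]_(k', nR)) : 'M[C]_(k + k', nR) :=
  col_mx w.1 (w.2 *m (invmx Psi)^T).

Lemma Ff_S c x1 x2 : Ff c x1 x2 = c * (x1^T *m Smx *m x2) 0 0.
Proof.
rewrite /Ff /Smx -[in RHS](vsubmxK x1) -[in RHS](vsubmxK x2) tr_col_mx mul_row_block.
rewrite ?mulmx0 ?mul0mx ?add0r ?addr0 mul_row_col.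
have -> : (usubmx x1)^T *m (e *: L^T) *m dsubmx x2 =
   e *: ((dsubmx x2)^T *m L *m usubmx x1)^T.
  by rewrite !trmx_mul trmxK -scalemxAr -scalemxAl mulmxA.
have H2 : forall A B : 'M[C]_1, (A + B) 0 0 = A 0 0 + B 0 0 by move=> *; rewrite mxE.
have H3 : forall (a : C) (A : 'M[C]_1), (a *: A) 0 0 = a * A 0 0 by move=> *; rewrite mxE.
have H4 : forall (A : 'M[C]_1), A^T 0 0 = A 0 0 by move=> *; rewrite mxE.
by rewrite H2 H3 H4.
Qed.

Hypothesis Pu : Psi \in unitmx.
Hypothesis Pt : Psi^T = e *: Psi.
Hypothesis ee : e * e = 1.

Lemma bf_S w1 w2 : bf w1 w2 = \tr (Psi *m (Wof w1)^T *m Smx *m Wof w2).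
Proof.
rewrite /bf /Wof /Smx tr_col_mx -!mulmxA mul_block_col ?mul0mx ?add0r ?addr0.
rewrite mul_row_col mulmxDr mxtraceD trmx_mul trmxK addrC.
congr (_ + _).
  rewrite -scalemxAl -!scalemxAr mxtraceZ [in RHS]mulmxA [in RHS]mulmxA [in RHS]mulmxA.
  rewrite [X in _ = _ * X]mxtrace_mulC [in RHS]mulmxA.
  rewrite (mulmxA (invmx Psi)^T Psi).
  have -> : (invmx Psi)^T *m Psi = e%:M.
    have Ps : Psi = e *: Psi^T by rewrite Pt scalerA ee scale1r.
    by rewrite {2}Ps -scalemxAr -trmx_mul (mulmxV Pu) trmx1 scalemx1.
  rewrite mul_scalar_mx -!scalemxAl mxtraceZ mulrA ee mul1r.
  by rewrite -[in RHS]mxtrace_tr !trmx_mul !trmxK !mulmxA.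
by rewrite !mulmxA mulmxV // mul1mx.
Qed.

Lemma W_Phi A B K D w :
  Wof (Phi A B K D Psi w) = block_mx A B K D *m Wof w.
Proof.
rewrite /Wof /Phi /tens_act /= mul_block_col !trmx1 !mulmx1 mulmxDl.
by rewrite -!mulmxA -trmx_mul (mulVmx Pu) trmx1 mulmx1.
Qed.

Lemma W_surj W : Wof (usubmx W, dsubmx W *m Psi^T) = W.
Proof.
by rewrite /Wof /= -mulmxA -trmx_mul mulVmx // trmx1 mulmx1 vsubmxK.
Qed.
End B.

Section Main.
Variable R : realType.
Local Notation C := (R[i]).
Variables (k k' nR : nat) (L : 'M[C]_(k', k)) (e : C) (Psi : 'M[C]_nR) (c : C).
Hypothesis Pu : Psi \in unitmx.
Hypothesis Pt : Psi^T = e *: Psi.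
Hypothesis ee : e * e = 1.
Hypothesis Pn0 : Psi != 0.
Hypothesis cn0 : c != 0.
Variables (A : 'M[C]_k) (B : 'M[C]_(k, k')) (K : 'M[C]_(k', k)) (D : 'M[C]_k').
Local Notation M := (block_mx A B K D).
Local Notation S := (Smx L e).
Local Notation W := (Wof Psi).

Lemma trB3 n (X Y : 'M[C]_n) (W1 W2 : 'M[C]_(n, nR)) :
  \tr (Psi *m W1^T *m (X - Y) *m W2) =
  \tr (Psi *m W1^T *m X *m W2) - \tr (Psi *m W1^T *m Y *m W2).
Proof. by rewrite mulmxBr mulmxBl -raddfB. Qed.
Lemma trD3 n (X Y : 'M[C]_n) (W1 W2 : 'M[C]_(n, nR)) :
  \tr (Psi *m W1^T *m (X + Y) *m W2) =
  \tr (Psi *m W1^T *m X *m W2) + \tr (Psi *m W1^T *m Y *m W2).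
Proof. by rewrite mulmxDr mulmxDl -raddfD. Qed.
Lemma cB3 n (X Y : 'M[C]_n) (x1 x2 : 'cV[C]_n) :
  (x1^T *m (X - Y) *m x2) 0 0 = (x1^T *m X *m x2) 0 0 - (x1^T *m Y *m x2) 0 0.
Proof. by rewrite mulmxBr mulmxBl !mxE. Qed.
Lemma cD3 n (X Y : 'M[C]_n) (x1 x2 : 'cV[C]_n) :
  (x1^T *m (X + Y) *m x2) 0 0 = (x1^T *m X *m x2) 0 0 + (x1^T *m Y *m x2) 0 0.
Proof. by rewrite mulmxDr mulmxDl !mxE. Qed.

Lemma bf_Phi2 w1 w2 : bf L (Phi A B K D Psi w1) (Phi A B K D Psi w2) =
  \tr (Psi *m (W w1)^T *m (M^T *m S *m M) *m W w2).
Proof. by rewrite (bf_S L Pu Pt ee) !W_Phi // trmx_mul !mulmxA. Qed.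
Lemma bf_Phil w1 w2 : bf L (Phi A B K D Psi w1) w2 =
  \tr (Psi *m (W w1)^T *m (M^T *m S) *m W w2).
Proof. by rewrite (bf_S L Pu Pt ee) !W_Phi // trmx_mul !mulmxA. Qed.
Lemma bf_Phir w1 w2 : bf L w1 (Phi A B K D Psi w2) =
  \tr (Psi *m (W w1)^T *m (S *m M) *m W w2).
Proof. by rewrite (bf_S L Pu Pt ee) !W_Phi // !mulmxA. Qed.

Lemma bf_zero (T : 'M[C]_(k + k')) :
  (forall w1 w2, \tr (Psi *m (W w1)^T *m T *m W w2) = 0) -> T = 0.
Proof.
move=> H; apply: (form0_tr Pn0) => W1 W2.
by rewrite -(W_surj Pu W1) -(W_surj Pu W2) H.
Qed.

Lemma Ff_zero (T : 'M[C]_(k + k')) :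
  (forall x1 x2 : 'cV_(k + k'), c * (x1^T *m T *m x2) 0 0 = 0) -> T = 0.
Proof.
move=> H; apply: form0_cV => x1 x2; have := H x1 x2.
by move/eqP; rewrite mulf_eq0 (negbTE cn0) /= => /eqP.
Qed.

Lemma main_isom :
  respects_isom (bf L) (Phi A B K D Psi) <-> respects_isom (Ff L e c) (mulmx M).
Proof.
have E : respects_isom (bf L) (Phi A B K D Psi) <-> M^T *m S *m M = S.
  split=> [H | H w1 w2].
    apply/eqP; rewrite -subr_eq0; apply/eqP/bf_zero => w1 w2.
    by rewrite trB3 -bf_Phi2 -(bf_S L Pu Pt ee) H subrr.
  by rewrite bf_Phi2 H (bf_S L Pu Pt ee).
rewrite E; split=> [H x1 x2 | H].
  by rewrite !Ff_S trmx_mul !mulmxA -(mulmxA x1^T M^T S) -(mulmxA x1^T (M^T *m S) M) H.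
apply/eqP; rewrite -subr_eq0; apply/eqP/Ff_zero => x1 x2.
rewrite cB3 mulrBr !mulmxA; have := H x1 x2; rewrite !Ff_S trmx_mul !mulmxA => ->.
exact: subrr.
Qed.

Lemma main_inf :
  respects_inf (bf L) (Phi A B K D Psi) <-> respects_inf (Ff L e c) (mulmx M).
Proof.
have E : respects_inf (bf L) (Phi A B K D Psi) <-> M^T *m S + S *m M = 0.
  split=> [H | H w1 w2].
    apply/bf_zero => w1 w2; by rewrite trD3 -bf_Phil -bf_Phir H.
  by rewrite bf_Phil bf_Phir -trD3 H mulmx0 mul0mx raddf0.
rewrite E; split=> [H x1 x2 | H].
  rewrite !Ff_S -mulrDr trmx_mul !mulmxA -(mulmxA x1^T M^T S) -(mulmxA x1^T S M) -cD3.
  by rewrite H mulmx0 mul0mx mxE mulr0.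
apply/Ff_zero => x1 x2.
rewrite cD3 mulrDr !mulmxA; have := H x1 x2; rewrite !Ff_S trmx_mul !mulmxA.
by [].
Qed.
End Main.

Lemma inv_invol (G : topologicalType) (mul : G -> G -> G) (inv : G -> G) (one : G) :
  compact_group mul inv one -> forall g, inv (inv g) = g.
Proof.
case=> As Li Lv _ _.
have Rv : forall x, mul x (inv x) = one.
  move=> x.
  have -> : mul x (inv x) = mul (mul (inv (inv x)) (inv x)) (mul x (inv x)) by rewrite Lv Li.
  by rewrite -As (As (inv x)) Lv Li Lv.
have Ri : forall x, mul x one = x by move=> x; rewrite -(Lv x) As Rv Li.
by move=> g; rewrite -(Ri (inv (inv g))) -(Lv g) As Lv Li.
Qed.

Section Schur.
Variables (R : realType) (G : topologicalType) (n : nat) (rho : G -> 'M[R[i]]_n).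

Lemma schur : irreducible_rep rho -> forall X : 'M[R[i]]_n,
  (forall g, X *m rho g = rho g *m X) -> exists a, X = a%:M.
Proof.
case=> n0 irr X eqX.
have : size (char_poly X^T) != 1%N by rewrite size_char_poly; by case: (n) n0.
case/closed_rootP=> a; rewrite -eigenvalue_root_char /eigenvalue /eigenspace => Hn0.
set U := kermx (X^T - a%:M).
have inv : invariant_subspace rho U.
  move=> g; rewrite sub_kermx -mulmxA.
  have -> : (rho g)^T *m (X^T - a%:M) = (X^T - a%:M) *m (rho g)^T.
    have -> : X^T - a%:M = (X - a%:M)^T by rewrite linearB /= tr_scalar_mx.
    by rewrite -!trmx_mul mulmxBl mulmxBr eqX scalar_mxC.
  by rewrite mulmxA mulmx_ker mul0mx.
exists a; case: (irr U inv) => [/eqP | rk].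
  by rewrite mxrank_eq0 (negbTE Hn0).
have : (1%:M <= U)%MS by apply: submx_full; rewrite /row_full rk.
rewrite sub_kermx mul1mx subr_eq0 => /eqP XT.
by rewrite -(trmxK X) XT tr_scalar_mx.
Qed.
End Schur.

Lemma TSg (R : realType) p q (I : finType) (f : I -> 'M[R[i]]_(p, q)) :
  (\sum_(c : I) f c)^T = \sum_c (f c)^T.
Proof. by rewrite raddf_sum. Qed.

Lemma TZg (R : realType) p q (a : R[i]) (A : 'M[R[i]]_(p, q)) : (a *: A)^T = a *: A^T.
Proof. by rewrite linearZ. Qed.

Section Link.
Variables (R : realType) (G : topologicalType) (mul : G -> G -> G) (inv : G -> G) (one : G).
Hypothesis hG : compact_group mul inv one.
Variables (nR : nat) (rhoR : G -> 'M[R[i]]_nR) (m : nat) (rhoV : G -> 'M[R[i]]_m).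
Hypothesis irrR : irreducible_rep rhoR.
Variables (k : nat) (hb : 'I_k -> 'M[R[i]]_(m, nR)) (k' : nat) (fb : 'I_k' -> 'M[R[i]]_(m, nR)).
Hypothesis hbE : forall a, equivariant rhoR rhoV (hb a).
Hypothesis fbE : forall c, equivariant (dual_rep inv rhoR) (dual_rep inv rhoV) (fb c).

Definition lam c a : R[i] := \tr ((fb c)^T *m hb a) / nR%:R.
Definition Lam : 'M[R[i]]_(k', k) := \matrix_(c, a) lam c a.

Lemma nR_gt0 : (0 < nR)%N. Proof. by case: irrR. Qed.

Lemma gram c a : (fb c)^T *m hb a = (lam c a)%:M.
Proof.
have : exists x, (fb c)^T *m hb a = x%:M.
  apply: (schur irrR) => g.
  have H1 := fbE c (inv g); rewrite /dual_rep (inv_invol hG) in H1.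
  have H2 : rhoR g *m (fb c)^T = (fb c)^T *m rhoV g.
    by rewrite -[rhoR g]trmxK -[rhoV g]trmxK -!trmx_mul H1.
  by rewrite -mulmxA hbE mulmxA -H2 mulmxA.
case=> x Hx; rewrite /lam Hx mxtrace_scalar -[x *+ nR]mulr_natr mulfK //.
by rewrite pnatr_eq0 -lt0n nR_gt0.
Qed.

Lemma ev_mx n (f v : 'cV[R[i]]_n) : ev f v = (f^T *m v) 0 0.
Proof. by rewrite /ev !mxE; apply: eq_bigr => j _; rewrite !mxE. Qed.

Lemma sum_delta_col n (r : 'rV[R[i]]_n) :
  \sum_(i < n) r 0 i *: (delta_mx i 0 : 'cV_n) = r^T.
Proof. by rewrite [in RHS](row_sum_delta r) raddf_sum /=; apply: eq_bigr => i _; rewrite linearZ /= trmx_delta. Qed.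

Lemma eps1 w : (epsilon hb fb w).1 = \sum_a hb a *m (row a w.1)^T.
Proof.
rewrite /epsilon /=; apply: eq_bigr => a _.
by rewrite -sum_delta_col mulmx_sumr; apply: eq_bigr => i _; rewrite scalemxAr mxE.
Qed.

Lemma eps2 w : (epsilon hb fb w).2 = \sum_c fb c *m (row c w.2)^T.
Proof.
rewrite /epsilon /=; apply: eq_bigr => a _.
by rewrite -sum_delta_col mulmx_sumr; apply: eq_bigr => i _; rewrite scalemxAr mxE.
Qed.

Lemma tr_key p (X : 'M[R[i]]_(k', p)) (Y : 'M[R[i]]_(k, p)) :
  \tr (X^T *m Lam *m Y) = \sum_c \sum_a lam c a * (X *m Y^T) c a.
Proof.
rewrite -mulmxA mxtrace_mulC (matrix_sum_delta Lam) !mulmx_suml raddf_sum /=.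
apply: eq_bigr => c _; rewrite -mulmxA mulmx_suml raddf_sum /=; apply: eq_bigr => a _.
rewrite mxE -scalemxAl mxtraceZ mxtrace_mulC tr_delta.
by rewrite -[Y *m X^T]trmxK trmx_mul trmxK mxE.
Qed.

Lemma key w w' : ev (epsilon hb fb w).2 (epsilon hb fb w').1 =
  \tr (w.2^T *m Lam *m w'.1).
Proof.
rewrite tr_key ev_mx eps1 eps2.
have TS : forall (I : finType) (f : I -> 'cV[R[i]]_m), (\sum_(c : I) f c)^T = \sum_c (f c)^T.
  by move=> I f; rewrite raddf_sum.
rewrite TS mulmx_suml summxE.
apply: eq_bigr => c _; rewrite mulmx_sumr summxE; apply: eq_bigr => a _.
rewrite trmx_mul trmxK mulmxA -(mulmxA _ (fb c)^T) gram mul_mx_scalar -scalemxAl mxE.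
congr (_ * _).
by rewrite tr_row rowE colE !mulmxA -rowE -colE -row_mul !mxE.
Qed.

Lemma bform_bf w1 w2 : bform hb fb w1 w2 = bf Lam w1 w2.
Proof. by rewrite /bform /b0 /bf !key. Qed.

Lemma pairing_tr (F X : 'M[R[i]]_(m, nR)) : pairing F X = \tr (F^T *m X).
Proof.
rewrite /pairing /mxtrace; apply: eq_bigr => i _.
by rewrite ev_mx trmx_mul trmx_delta !mulmxA -rowE -row_mul -colE !mxE.
Qed.

Lemma pair_key (d : 'cV[R[i]]_k') (u : 'cV[R[i]]_k) :
  pairing (combo fb d) (combo hb u) = nR%:R * ((d^T *m Lam *m u) 0 0).
Proof.
rewrite pairing_tr /combo -trace_mx11 tr_key mulr_sumr.
rewrite TSg mulmx_suml raddf_sum /=; apply: eq_bigr => c _.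
rewrite mulmx_sumr raddf_sum /= mulr_sumr; apply: eq_bigr => a _.
rewrite TZg -scalemxAl -scalemxAr gram !mxtraceZ mxtrace_scalar.
rewrite !mxE big_ord1 !mxE -[_ *+ nR]mulr_natr.
ring.
Qed.

Lemma sform_Ff x1 x2 : sform hb fb x1 x2 = Ff Lam 1 nR%:R x1 x2.
Proof. rewrite /sform /Ff !pair_key; ring. Qed.

Lemma aform_Ff x1 x2 : aform hb fb x1 x2 = Ff Lam (-1) nR%:R x1 x2.
Proof. rewrite /aform /Ff !pair_key; ring. Qed.

Lemma nR_neq0 : (nR%:R : R[i]) != 0.
Proof. by rewrite pnatr_eq0 -lt0n nR_gt0. Qed.

Lemma Psi_neq0 (Psi : 'M[R[i]]_nR) : Psi \in unitmx -> Psi != 0.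
Proof.
move=> Pu; apply/eqP => P0; have := mulmxV Pu; rewrite P0 mul0mx => /matrixP.
move/(_ (Ordinal nR_gt0) (Ordinal nR_gt0)); rewrite !mxE eqxx /=.
by move/eqP; rewrite eq_sym oner_eq0.
Qed.

Lemma ev_delta (Psi : 'M[R[i]]_nR) i j :
  ev (Psi *m delta_mx j 0) (delta_mx i 0) = Psi i j.
Proof.
by rewrite ev_mx trmx_mul trmx_delta -rowE -colE !mxE.
Qed.

Lemma sym_T (Psi : 'M[R[i]]_nR) : psi_symmetric Psi -> Psi^T = 1 *: Psi.
Proof.
move=> H; rewrite scale1r; apply/matrixP => i j; have := H (delta_mx j 0) (delta_mx i 0).
by rewrite !ev_delta mxE => ->.
Qed.

Lemma alt_T (Psi : 'M[R[i]]_nR) : psi_alternating Psi -> Psi^T = (-1) *: Psi.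
Proof.
move=> H; rewrite scaleN1r; apply/matrixP => i j; have := H (delta_mx i 0) (delta_mx j 0).
by rewrite !ev_delta !mxE => ->.
Qed.
End Link.

Lemma isom_ext (T : Type) (K : zmodType) (F1 F2 : T -> T -> K) (f : T -> T) :
  (forall a b, F1 a b = F2 a b) -> respects_isom F1 f <-> respects_isom F2 f.
Proof. by move=> E; split=> H w1 w2; [rewrite -!E | rewrite !E]. Qed.
Lemma inf_ext (T : Type) (K : zmodType) (F1 F2 : T -> T -> K) (f : T -> T) :
  (forall a b, F1 a b = F2 a b) -> respects_inf F1 f <-> respects_inf F2 f.
Proof. by move=> E; split=> H w1 w2; [rewrite -!E | rewrite !E]. Qed.
End Helpers.
Import Helpers.

Theorem proposition3p13 (R : realType) (G : topologicalType)
  (mul : G -> G -> G) (inv : G -> G) (one : G)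
  (hG : compact_group mul inv one)
  (nR : nat) (rhoR : G -> 'M[R[i]]_nR)
  (hR : unitary_rep mul one rhoR) (irrR : irreducible_rep rhoR)
  (selfdual : isomorphic_reps rhoR (dual_rep inv rhoR))
  (m : nat) (rhoV : G -> 'M[R[i]]_m)
  (hV : unitary_rep mul one rhoV) (isoV : isotypic_of rhoR rhoV)
  (k : nat) (hb : 'I_k -> 'M[R[i]]_(m, nR))
  (hHb : is_basis (equivariant rhoR rhoV) hb)
  (k' : nat) (fb : 'I_k' -> 'M[R[i]]_(m, nR))
  (hHsb : is_basis (equivariant (dual_rep inv rhoR) (dual_rep inv rhoV)) fb)
  (Psi : 'M[R[i]]_nR)
  (hPsi : equivariant rhoR (dual_rep inv rhoR) Psi) (uPsi : Psi \in unitmx) :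
  (psi_symmetric Psi ->
   forall (A : 'M[R[i]]_k) (B : 'M[R[i]]_(k, k')) (K : 'M[R[i]]_(k', k))
          (D : 'M[R[i]]_k'),
     (block_mx A B K D \in unitmx ->
        (respects_isom (bform hb fb) (Phi A B K D Psi) <->
         respects_isom (sform hb fb) (mulmx (block_mx A B K D)))) /\
     (respects_inf (bform hb fb) (Phi A B K D Psi) <->
      respects_inf (sform hb fb) (mulmx (block_mx A B K D)))) /\
  (psi_alternating Psi ->
   forall (A : 'M[R[i]]_k) (B : 'M[R[i]]_(k, k')) (K : 'M[R[i]]_(k', k))
          (D : 'M[R[i]]_k'),
     (block_mx A B K D \in unitmx ->
        (respects_isom (bform hb fb) (Phi A B K D Psi) <->
         respects_isom (aform hb fb) (mulmx (block_mx A B K D)))) /\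
     (respects_inf (bform hb fb) (Phi A B K D Psi) <->
      respects_inf (aform hb fb) (mulmx (block_mx A B K D)))).
Proof.
case: hHb => hbE _ _; case: hHsb => fbE _ _.
have Pn0 := Psi_neq0 irrR uPsi.
have cn0 := nR_neq0 irrR.
have BF := bform_bf hG irrR hbE fbE.
split=> HP A B K D.
- have Pt := sym_T HP.
  have ee : (1 : R[i]) * 1 = 1 by rewrite mulr1.
  split.
  + move=> _; rewrite (isom_ext _ BF) (isom_ext _ (sform_Ff hG irrR hbE fbE)).
    exact: main_isom.
  + rewrite (inf_ext _ BF) (inf_ext _ (sform_Ff hG irrR hbE fbE)).
    exact: main_inf.
- have Pt := alt_T HP.
  have ee : (-1 : R[i]) * -1 = 1 by rewrite mulrNN mulr1.
  split.
  + move=> _; rewrite (isom_ext _ BF) (isom_ext _ (aform_Ff hG irrR hbE fbE)).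
    exact: main_isom.
  + rewrite (inf_ext _ BF) (inf_ext _ (aform_Ff hG irrR hbE fbE)).
    exact: main_inf.
Qed.
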